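(* For any integers $s,k\geq 2$, we have $\chi(\overline{K}(sk,k))\leq h_o(\overline{K}(sk,k))$, and $\overline{K}(sk,k)$ contains a strongly $1$-shallow $K_t$-minor with $t=\chi(\overline{K}(sk,k))$.
   Context: For integers $n\ge 2k\ge 4$, $\overline{K}(n,k)$ is the complement of the Kneser graph: its vertices are the $k$-element subsets of $[n]=\{1,\dots,n\}$, two distinct ones adjacent iff they intersect. $\chi$ is chromatic number. A $K_t$-minor of a graph $G$ is given by $t$ pairwise vertex-disjoint connected subgraphs (bags), any two joined by an edge of $G$. A star is $K_{1,s}$, $s\ge1$. A $K_t$-minor is strongly $1$-shallow if each bag is a single vertex or a star, and every two bags are joined by an edge each of whose endpoints is either the unique vertex of a single-vertex bag or a leaf of a star bag. Signed graphs: $(G,\sigma)$ with $\sigma:E(G)\to\{+,-\}$; switching at $x$ flips signs of edges at $x$. $(H,\pi)$ is a minor of $(G,\sigma)$ if for some $\tau$ switching equivalent to $\sigma$ there are disjoint subgraphs $B_x$ ($x\in V(H)$) whose $\tau$-positive edges span each $B_x$ connectedly, and for each edge $xy$ of $H$ an edge $uv$ with $u\in B_x,v\in B_y$ and $\tau(uv)=\pi(xy)$. $h_o(G)$ is the largest $t$ such that $(K_t,-)$ (all edges negative) is a minor of $(G,-)$. *)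

(* Defs.v *)
From mathcomp Require Import all_boot.
Set Implicit Arguments. Unset Strict Implicit. Unset Printing Implicit Defensive.

(* A (simple) graph is a relation [e : rel T] on a finite type [T];
   [e x y] means that x and y are adjacent.  Loops are ignored. *)

Definition colorable (T : finType) (e : rel T) (c : nat) : bool :=
  [exists f : {ffun T -> 'I_c},
     [forall x, [forall y, ((x != y) && e x y) ==> (f x != f y)]]].

Lemma colorable_card (T : finType) (e : rel T) : exists c, colorable e c.
Proof.
exists #|T|; apply/existsP; exists [ffun x => enum_rank x].
apply/forallP => x; apply/forallP => y; apply/implyP => /andP[nxy _].
by rewrite !ffunE (inj_eq enum_rank_inj).
Qed.

Definition chi (T : finType) (e : rel T) : nat := ex_minn (colorable_card e).

Definition connected_in (T : finType) (r : rel T) (B : {set T}) : Prop :=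
  B != set0 /\
  forall u v, u \in B -> v \in B ->
    connect [rel a b | [&& a \in B, b \in B & r a b]] u v.

(* A signature switching equivalent to the all-negative one is obtained by
   switching at a set X of vertices: an edge uv is then positive iff exactly
   one of u, v lies in X, and negative iff u, v lie on the same side of X.
   (K_t,-) is a minor of (G,-) iff for some such X there are pairwise
   disjoint bags B_i (i < t), each connected by its positive edges, and for
   i <> j a negative edge between B_i and B_j.  (A bag subgraph is
   connected via its positive edges iff the subgraph induced on its vertex
   set is, so bags are given by their vertex sets.) *)
Definition odd_Kminor (T : finType) (e : rel T) (t : nat) : Prop :=
  exists (X : {set T}) (B : 'I_t -> {set T}),
    (forall i j, i != j -> [disjoint B i & B j]) /\
    (forall i, connected_in [rel u v | e u v && ((u \in X) != (v \in X))] (B i)) /\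
    (forall i j, i != j -> exists u v,
        [/\ u \in B i, v \in B j, e u v & (u \in X) = (v \in X)]).

Definition is_odd_hadwiger (T : finType) (e : rel T) (h : nat) : Prop :=
  odd_Kminor e h /\ forall t, odd_Kminor e t -> t <= h.

(* Bag i is given by a vertex r i and a set L i of leaves.  If L i is empty
   the bag is the single vertex r i; otherwise it is the star with centre
   r i and leaves L i (r i not in L i, r i adjacent to every leaf). *)
Definition bag_vertices (T : finType) (r : T) (L : {set T}) : {set T} :=
  r |: L.
Definition bag_attach (T : finType) (r : T) (L : {set T}) : {set T} :=
  if L == set0 then [set r] else L.

Definition strongly_1shallow_Kminor (T : finType) (e : rel T) (t : nat) : Prop :=
  exists (r : 'I_t -> T) (L : 'I_t -> {set T}),
    (forall i, r i \notin L i /\ forall l, l \in L i -> e (r i) l) /\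
    (forall i j, i != j -> [disjoint bag_vertices (r i) (L i) & bag_vertices (r j) (L j)]) /\
    (forall i j, i != j -> exists u v,
        [/\ u \in bag_attach (r i) (L i), v \in bag_attach (r j) (L j) & e u v]).

Definition kset (n k : nat) := {A : {set 'I_n} | #|A| == k}.

Definition Kbar (n k : nat) : rel (kset n k) :=
  fun A B => (val A != val B) && (val A :&: val B != set0).
Arguments Kbar n k : clear implicits.

(* Main.v *)
Require Import Defs.
From Stdlib Require Import Classical.
From mathcomp Require Import all_boot zify.
Set Implicit Arguments. Unset Strict Implicit. Unset Printing Implicit Defensive.

Section Hall.
Variables (R C : finType) (E : R -> C -> bool) (c0 : C).

Definition NB (W : {set R}) := [set c | [exists r in W, E r c]].

Lemma NBU W V : NB (W :|: V) = NB W :|: NB V.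
Proof.
apply/setP=> c; rewrite !inE; apply/idP/idP.
  case/existsP=> r /andP[]; rewrite inE => /orP[] rW Erc; apply/orP; [left|right];
  by apply/existsP; exists r; rewrite rW.
case/orP=> /existsP[r /andP[rW Erc]]; apply/existsP; exists r; by rewrite inE rW ?orbT.
Qed.

Lemma sum_le_shift (A : {set C}) (d d' : C -> nat) c1 :
  (forall c, d c <= d' c + (c == c1)) -> \sum_(c in A) d c <= \sum_(c in A) d' c + 1.
Proof.
move=> H.
apply: (@leq_trans (\sum_(c in A) (d' c + (c == c1)))); first exact: leq_sum.
rewrite big_split /= leq_add2l.
case: (boolP (c1 \in A)) => c1A.
  rewrite (bigD1 c1) //= eqxx big1 // => c /andP[_ /negbTE ->] //.
by rewrite big1 // => c cA; apply/eqP; rewrite eqb0; apply: contraNneq c1A => <-.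
Qed.

Lemma hall (Z : {set R}) (d : C -> nat) :
  (forall W : {set R}, W \subset Z -> #|W| <= \sum_(c in NB W) d c) ->
  exists g : R -> C, (forall r, r \in Z -> E r (g r)) /\
     forall c, #|[set r in Z | g r == c]| <= d c.
Proof.
move: {2}#|Z| (leqnn #|Z|) => N; elim: N Z d => [|N IH] Z d.
  rewrite leqn0 cards_eq0 => /eqP -> _; exists (fun _ => c0); split=> [r|c]; first by rewrite inE.
  by rewrite (_ : [set _ in _ | _] = set0) ?cards0 //; apply/setP => r; rewrite !inE.
move=> HZ HH.
case: (boolP [exists W : {set R}, [&& W \subset Z, W != set0, W != Z & #|W| == \sum_(c in NB W) d c]]).
  case/existsP => W /and4P[WZ W0 WnZ /eqP tW].
  have ltW: #|W| < #|Z| by apply: proper_card; rewrite properEneq WnZ WZ.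
  have [g1 [g1E g1c]] := IH W d (leq_trans ltW HZ) (fun V VW => HH V (subset_trans VW WZ)).
  pose d' := fun c => if c \in NB W then 0 else d c.
  have HZ' : forall V : {set R}, V \subset Z :\: W -> #|V| <= \sum_(c in NB V) d' c.
    move=> V VZ; move: VZ.
    move=> VZ.
    have VW : [disjoint V & W].
      by rewrite -setI_eq0; apply/eqP/setP=> r; rewrite !inE; apply/andP=> -[/(subsetP VZ)]; rewrite !inE => /andP[/negbTE ->].
    have VWZ : V :|: W \subset Z by rewrite subUset WZ andbT; apply: subset_trans VZ (subsetDl _ _).
    have := HH _ VWZ; rewrite NBU.
    have -> : #|V :|: W| = #|V| + #|W| by apply/eqP; rewrite (leq_card_setU V W).2.
    have -> : \sum_(c in NB V :|: NB W) d c = \sum_(c in NB W) d c + \sum_(c in NB V) d' c.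
      rewrite big_mkcond [\sum_(c in NB W) _]big_mkcond [\sum_(c in NB V) _]big_mkcond -big_split /=.
      by apply: eq_bigr => c _; rewrite /d' in_setU; case: (c \in NB V); case: (c \in NB W); rewrite ?addn0.
    by rewrite tW [X in X <= _]addnC leq_add2l.
  have ZWN : #|Z :\: W| <= N.
    rewrite cardsDS //; move: HZ ltW.
    have : 0 < #|W| by rewrite card_gt0.

    lia.
  have [g2 [g2E g2c]] := IH _ d' ZWN HZ'.
  exists (fun r => if r \in W then g1 r else g2 r); split.
    by move=> r rZ; case: ifP => rW; [apply: g1E| apply: g2E; rewrite inE rW rZ].
  move=> c.
  have -> : [set r in Z | (if r \in W then g1 r else g2 r) == c] =
            [set r in W | g1 r == c] :|: [set r in Z :\: W | g2 r == c].
    apply/setP=> r; rewrite !inE; case: (boolP (r \in W)) => rW /=; last by [].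
    by rewrite orbF (subsetP WZ r rW).
  apply: leq_trans (leq_card_setU _ _).1 _.
  have := g2c c; have := g1c c; rewrite /d'.
  case: (boolP (c \in NB W)) => cW; first by move=> h1; rewrite leqn0 => /eqP ->; rewrite addn0.
  have -> : [set r in W | g1 r == c] = set0.
    apply/setP=> r; rewrite !inE; apply/andP=> -[rW /eqP gc]; move: cW; rewrite inE.
    by case/existsP; exists r; rewrite rW -gc g1E.
  by rewrite cards0.
move=> nt.
case: (set_0Vmem Z) => [->|[r0 r0Z]].
  exists (fun _ => c0); split=> [r|c]; first by rewrite inE.
  by rewrite (_ : [set _ in _ | _] = set0) ?cards0 //; apply/setP => r; rewrite !inE.
have : 0 < \sum_(c in NB [set r0]) d c by have := HH [set r0]; rewrite sub1set cards1 => /(_ r0Z).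
case: (pickP [pred c | (c \in NB [set r0]) && (0 < d c)]) => [c1 /andP[c1N dc1]|none]; last first.
  by rewrite big1 // => c cN; have := none c; rewrite /= cN /=; case: (d c).
have Er0 : E r0 c1.
  by move: c1N; rewrite inE => /existsP[r /andP[]]; rewrite inE => /eqP ->.
pose d' := fun c => d c - (c == c1).
have HZ' : forall V : {set R}, V \subset Z :\ r0 -> #|V| <= \sum_(c in NB V) d' c.
  move=> V VZ.
  case: (set_0Vmem V) => [->|[v vV]]; first by rewrite cards0.
  have VZ' : V \subset Z by apply: subset_trans VZ (subsetDl _ _).
  have VnZ : V != Z.
    apply/eqP => VeZ; move: VZ; rewrite VeZ => /subsetP /(_ r0 r0Z); rewrite !inE eqxx //.
  have V0 : V != set0 by apply/set0Pn; exists v.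
  have ntV : #|V| != \sum_(c in NB V) d c.
    apply: contra nt => eV; apply/existsP; exists V; by rewrite VZ' V0 VnZ eV.
  have := HH _ VZ'; rewrite leq_eqVlt (negbTE ntV) /= => lt.
  have sh : \sum_(c in NB V) d c <= \sum_(c in NB V) d' c + 1.
    by apply: (@sum_le_shift _ d d' c1) => c; rewrite /d'; case: (c == c1) => /=; lia.
  lia.
have ZN : #|Z :\ r0| <= N by move: HZ; rewrite (cardsD1 r0 Z) r0Z add1n ltnS.
have [g2 [g2E g2c]] := IH _ d' ZN HZ'.
exists (fun r => if r == r0 then c1 else g2 r); split.
  move=> r rZ; case: eqP => [->//|/eqP rr0]; apply: g2E; by rewrite !inE rr0.
move=> c.
have := g2c c; rewrite /d'.
case: (eqVneq c c1) => [->|cc1].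
  move=> h.
  apply: (@leq_trans #|r0 |: [set r in Z :\ r0 | g2 r == c1]|).
    apply: subset_leq_card; apply/subsetP => r; rewrite !inE.
    by case: (eqVneq r r0) => //= _ /andP[-> ->].
  apply: leq_trans (leq_card_setU _ _).1 _; rewrite cards1; lia.
rewrite subn0 => h; apply: leq_trans h; apply: subset_leq_card; apply/subsetP => r; rewrite !inE.
case: (eqVneq r r0) => [_ /andP[_ /eqP cc]|rr0 /= ->]; last by [].
by rewrite cc eqxx in cc1.
Qed.
End Hall.


Lemma sum_fiber (I J : finType) (A : pred I) (F : I -> J) (f : J -> nat) :
  \sum_(i | A i) f (F i) = \sum_j #|[set i | A i && (F i == j)]| * f j.
Proof.
rewrite (partition_big F xpredT) //=; apply: eq_bigr => j _.
rewrite (eq_bigr (fun _ => f j)); last by move=> i /andP[_ /eqP ->].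
rewrite sum_nat_const; congr (_ * _); apply: eq_card => i; by rewrite !inE.
Qed.

Lemma sum_eq_le (I : finType) (f g : I -> nat) :
  (forall i, f i <= g i) -> \sum_i f i = \sum_i g i -> forall i, f i = g i.
Proof.
move=> le eqs i; apply/eqP; rewrite eqn_leq le /=; apply/negP => lt.
move: eqs; rewrite (bigD1 i) //= [RHS](bigD1 i) //=.
have : \sum_(j | j != i) f j <= \sum_(j | j != i) g j by apply: leq_sum.
move: lt (le i); lia.
Qed.

Lemma card_graph (I J : finType) (f : I -> J) (Q : pred I) :
  #|[set p : I * J | (p.2 == f p.1) && Q p.1]| = #|[set i | Q i]|.
Proof.
rewrite -(card_imset _ (f := fun i => (i, f i))); last by move=> x y [].
apply: eq_card => -[i j]; rewrite inE /=; apply/andP/imsetP.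
  by case=> /eqP -> Qi; exists i; rewrite ?inE.
by case=> x; rewrite inE => Qx [-> ->].
Qed.

Lemma disjointU1 (T : finType) (x : T) (A B : {set T}) :
  x \notin B -> [disjoint A & B] -> [disjoint x |: A & B].
Proof.
rewrite -!setI_eq0 => xB /eqP dAB; apply/eqP/setP => y; move/setP: dAB => /(_ y).
rewrite !inE; case: (eqVneq y x) => [->|] //=; by rewrite (negbTE xB) andbF.
Qed.

Section Bar.
Variables (n k M s : nat).

Definition ltset m : {set 'I_n} := [set x : 'I_n | x < m].
Definition cnt (P : 'I_M -> 'I_s -> {set 'I_n}) S :=
  #|[set p : 'I_M * 'I_s | P p.1 p.2 == S]|.
Definition target m (S : {set 'I_n}) :=
  if (S \subset ltset m) && (#|S| <= k) then 'C(n - m, k - #|S|) else 0.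
Definition Inv m (P : 'I_M -> 'I_s -> {set 'I_n}) :=
  [/\ forall j i i', i != i' -> [disjoint P j i & P j i'],
      forall j, \sum_i #|P j i| = m
    & forall S, cnt P S = target m S].

Lemma part_props m (P : 'I_M -> 'I_s -> {set 'I_n}) : Inv m P -> forall j i,
  [/\ P j i \subset ltset m, #|P j i| <= k & 0 < 'C(n - m, k - #|P j i|)].
Proof.
case=> _ _ C j i.
have : 0 < cnt P (P j i).
  by rewrite /cnt card_gt0; apply/set0Pn; exists (j, i); rewrite inE.
by rewrite C /target; case: andP => // -[-> ->].
Qed.


Lemma sub_step1 m (ltmn : m < n) (T : {set 'I_n}) :
  Ordinal ltmn \notin T -> (T \subset ltset m.+1) = (T \subset ltset m).
Proof.
move=> omT; apply/subsetP/subsetP => H x xT; have := H x xT; rewrite !inE; last by lia.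
have xm : (x : nat) != m.
  by apply: contraNneq omT => e; rewrite (_ : Ordinal ltmn = x) //; apply: val_inj; rewrite /= e.
move: xm; lia.
Qed.

Lemma sub_step2 m (ltmn : m < n) (T : {set 'I_n}) :
  Ordinal ltmn \in T -> (T \subset ltset m.+1) = (T :\ Ordinal ltmn \subset ltset m).
Proof.
move=> omT; have h : Ordinal ltmn \notin T :\ Ordinal ltmn by rewrite in_setD1 eqxx.
rewrite -(sub_step1 h).
rewrite -{1}(setD1K omT) subUset sub1set !inE /=.
by rewrite ltnS leqnn.
Qed.

Lemma step m (P : 'I_M -> 'I_s -> {set 'I_n}) : n = s * k -> m < n -> Inv m P ->
  exists P', Inv m.+1 P'.
Proof.
move=> nsk ltmn IP; have pp := part_props IP; case: IP => Hd Hs Hc.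
have a0 : 0 < n - m by rewrite subn_gt0.
pose w (S : {set 'I_n}) := k - #|S|.
have rowsum : forall j, \sum_i w (P j i) = n - m.
  move=> j; have : \sum_i w (P j i) + \sum_i #|P j i| = s * k.
    rewrite -big_split /= (eq_bigr (fun _ => k)); last first.
      by move=> i _; rewrite /w subnK //; case: (pp j i).
    by rewrite sum_nat_const card_ord.
  rewrite Hs -nsk; lia.
pose d (S : {set 'I_n}) :=
  if (S \subset ltset m) && (#|S| < k) then 'C(n - m.+1, k - #|S|.+1) else 0.
have key : forall S, cnt P S * w S = (n - m) * d S.
  move=> S; rewrite Hc /target /d /w.
  case: (S \subset ltset m) => /=; last by rewrite muln0.
  case: (ltngtP #|S| k) => h.
  - rewrite -(subnSK h) -(subnSK ltmn) mul_bin_diag mulnC //.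
  - by rewrite mul0n muln0.
  - by rewrite h subnn !muln0.
have sumd : \sum_S d S = M.
  have : (n - m) * \sum_S d S = (n - m) * M.
    rewrite big_distrr /= -(eq_bigr _ (fun S _ => key S)) /cnt.
    have := sum_fiber (fun _ => true) (fun p : 'I_M * 'I_s => P p.1 p.2) w.
    rewrite (eq_bigr (fun S => #|[set p : 'I_M * 'I_s | P p.1 p.2 == S]| * w S)); last first.
      by move=> S _; congr (_ * _); apply: eq_card => p; rewrite !inE.
    move=> <-.
    rewrite -(pair_big xpredT xpredT (fun j i => w (P j i))) /=.
    rewrite (eq_bigr (fun _ => n - m)); last by move=> j _; apply: rowsum.
    by rewrite sum_nat_const card_ord mulnC.
  by move/eqP; rewrite eqn_pmul2l // => /eqP.
pose E := fun (j : 'I_M) (S : {set 'I_n}) => [exists i, P j i == S].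
have HH : forall W : {set 'I_M}, W \subset setT -> #|W| <= \sum_(S in NB E W) d S.
  move=> W _; rewrite -(leq_pmul2l a0) big_distrr /=.
  have -> : (n - m) * #|W| = \sum_(j in W) \sum_i w (P j i).
    rewrite (eq_bigr (fun _ => n - m)); last by move=> j _; apply: rowsum.
    by rewrite sum_nat_const mulnC.
  rewrite pair_big_dep.
  rewrite (sum_fiber (fun p : 'I_M * 'I_s => (p.1 \in W) && true) (fun p => P p.1 p.2) w).
  rewrite [X in _ <= X]big_mkcond /=; apply: leq_sum => S _.
  rewrite -key; case: ifP => SN.
    apply: leq_mul (leqnn _); apply: subset_leq_card; apply/subsetP => p; rewrite !inE.
    by case/andP.
  rewrite (_ : [set _ | _] = set0) ?cards0 //; apply/setP => -[j i]; rewrite !inE /=.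
  apply/negP => /andP[/andP[jW _] /eqP PS]; move/negP: SN; apply; rewrite inE.
  by apply/existsP; exists j; rewrite jW /E; apply/existsP; exists i; rewrite PS.
have [g [gE gc]] := hall set0 HH.
have gcnt : forall S, #|[set j in setT | g j == S]| = d S.
  apply: sum_eq_le gc _; rewrite sumd.
  rewrite (eq_bigr (fun S => #|[set j in setT | g j == S]| * 1)); last by move=> S _; rewrite muln1.
  by rewrite -(sum_fiber (fun j => j \in [set: 'I_M]) g (fun _ => 1)) sum_nat_const cardsT card_ord muln1.
have gE' : forall j, exists i, P j i == g j.
  by move=> j; have := gE j (in_setT j); rewrite /E => /existsP.
pose sel j := xchoose (gE' j).
have selP : forall j, P j (sel j) = g j by move=> j; apply/eqP; exact: (xchooseP (gE' j)).
pose om := Ordinal ltmn.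
have omP : forall j i, om \notin P j i.
  by move=> j i; case: (pp j i) => /subsetP sub _ _; apply/negP => /sub; rewrite inE ltnn.
exists (fun j i => if i == sel j then om |: P j i else P j i); split.
- move=> j i i' ne; case: ifP => ei; case: ifP => ei'.
  + by move: ne; rewrite (eqP ei) (eqP ei') eqxx.
  + exact: disjointU1 (omP _ _) (Hd _ _ _ ne).
  + by rewrite disjoint_sym; apply: disjointU1 (omP _ _) _; rewrite disjoint_sym; apply: Hd.
  + exact: Hd.
- move=> j; rewrite (bigD1 (sel j)) //= eqxx cardsU1 omP /=.
  rewrite (eq_bigr (fun i => #|P j i|)); last by move=> i /negbTE ->.
  by have := Hs j; rewrite (bigD1 (sel j)) //=; lia.
move=> T; case: (boolP (om \in T)) => omT.
  rewrite /cnt (_ : [set p | _] = [set p : 'I_M * 'I_s | (p.2 == sel p.1) && (g p.1 == T :\ om)]).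
    rewrite (card_graph sel (fun j => g j == T :\ om)).
    have -> : [set i | g i == T :\ om] = [set i in setT | g i == T :\ om] by apply/setP=> i; rewrite !inE.
    rewrite gcnt /d /target (sub_step2 omT) (cardsD1 om T) omT add1n.
    by [].
  apply/setP => -[j i]; rewrite !inE /=; case: (eqVneq i (sel j)) => [->|ni] /=.
    rewrite selP; apply/eqP/eqP => [<-|->]; first by rewrite setU1K // -selP omP.
    by rewrite setD1K.
  by apply/negbTE/eqP => e; move: (omP j i); rewrite e omT.
have gcnt' : forall S, #|[set j | g j == S]| = d S.
  by move=> S; rewrite -gcnt; apply: eq_card => j; rewrite !inE.
have e1 : cnt P T = cnt (fun j i => if i == sel j then om |: P j i else P j i) T + d T.
  rewrite /cnt -(cardsID [set p : 'I_M * 'I_s | p.2 == sel p.1] [set p | P p.1 p.2 == T]) addnC.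
  rewrite -gcnt' -(card_graph sel (fun j => g j == T)).
  congr (_ + _).
    apply: eq_card => -[j i]; rewrite !inE /=; case: eqP => ei //=.
    apply/esym/negbTE/eqP => e; move: omT; by rewrite -e setU11.
  apply: eq_card => -[j i]; rewrite !inE /=; case: (eqVneq i (sel j)) => [->|ni].
    by rewrite selP andbT.
  by rewrite andbF.
have tgt : target m T = target m.+1 T + d T.
  rewrite /target /d (sub_step1 omT); case: (T \subset ltset m) => //=.
  case: (ltngtP #|T| k) => h.
  - by rewrite -(subnSK h) -(subnSK ltmn) binS.
  - by [].
  - by rewrite h subnn !bin0 addn0.
move: e1; rewrite Hc tgt => /eqP; rewrite eqn_add2r => /eqP h; exact: (esym h).
Qed.


Lemma init : M * s = 'C(n, k) -> Inv 0 (fun _ _ => set0).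
Proof.
move=> Ms; split.
- by move=> j i i' _; rewrite -setI_eq0 setI0.
- by move=> j; rewrite big1 // => i _; rewrite cards0.
move=> S; rewrite /cnt /target; case: (eqVneq S set0) => [->|nS].
  rewrite sub0set cards0 /= subn0 subn0 -Ms.
  rewrite (_ : [set _ | _] = setT); first by rewrite cardsT card_prod !card_ord.
  by apply/setP => p; rewrite !inE.
have -> : S \subset ltset 0 = false.
  apply/negbTE/negP => /subsetP sub; case/set0Pn: nS => x /sub; by rewrite inE.
rewrite (_ : [set _ | _] = set0) ?cards0 //; apply/setP => p; rewrite !inE.
Qed.

Lemma reach : n = s * k -> M * s = 'C(n, k) -> forall m, m <= n ->
  exists P, Inv m P.
Proof.
move=> nsk Ms; elim=> [|m IH] le; first by exists (fun _ _ => set0); apply: init.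
have [P IP] := IH (ltnW le); exact: step nsk le IP.
Qed.

Lemma final_size P : Inv n P -> forall j i, #|P j i| = k.
Proof.
move=> IP j i; case: (part_props IP j i) => _ le; rewrite subnn bin0n lt0b => /eqP h.
lia.
Qed.

Lemma final_cnt P : Inv n P -> forall S : {set 'I_n}, #|S| = k -> cnt P S = 1.
Proof.
case=> _ _ Hc S hS; rewrite Hc /target hS leqnn andbT subnn subnn bin0.
by rewrite (_ : S \subset ltset n) //; apply/subsetP => x _; rewrite inE ltn_ord.
Qed.

Lemma cover P : Inv n P -> forall j (x : 'I_n), exists i, x \in P j i.
Proof.
case=> Hd Hs _ j x; case: (boolP [exists i, x \in P j i]) => [/existsP //|/existsPn nx].
pose D := [set p : 'I_s * 'I_n | p.2 \in P j p.1].
have cD : #|D| = n.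
  transitivity (\sum_i #|P j i|); last exact: Hs j.
  rewrite (eq_bigr (fun i => \sum_(y | y \in P j i) 1)); last by move=> i _; rewrite sum1_card.
  rewrite pair_big_dep /= -sum1_card; apply: eq_bigl => p; by rewrite !inE.
have inj : {in D &, injective (fun p : 'I_s * 'I_n => p.2)}.
  move=> [i1 y1] [i2 y2]; rewrite !inE /= => h1 h2 e; subst y2.
  case: (eqVneq i1 i2) => [->//|ne].
  by have := Hd j _ _ ne; rewrite -setI_eq0 => /eqP /setP /(_ y1); rewrite !inE h1 h2.
have := card_in_imset inj; rewrite cD => h.
have : #|[set p.2 | p in D]| <= #|[set: 'I_n] :\ x|.
  apply: subset_leq_card; apply/subsetP => y /imsetP [[i z]]; rewrite !inE /= => h1 ->.
  by rewrite andbT; apply: contraNneq (nx i) => <-.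
rewrite h => le; have := cardsD1 x [set: 'I_n]; rewrite cardsT card_ord in_setT /=.
move=> e; exfalso; move: le; by rewrite [in X in X <= _]e addnC addn1 ltnn.
Qed.

End Bar.

Lemma exists_max (P : nat -> Prop) N a : P a -> (forall t, P t -> t <= N) ->
  exists h, P h /\ forall t, P t -> t <= h.
Proof.
elim: N a => [|N IH] a Pa bnd.
  exists a; split=> // t Pt; have := bnd t Pt; have := bnd a Pa; lia.
case: (classic (P N.+1)) => [PN|nPN]; first by exists N.+1.
apply: (IH a Pa) => t Pt; have := bnd t Pt; rewrite leq_eqVlt => /orP[/eqP e|//].
by rewrite e in Pt.
Qed.

Lemma odd_bound (T : finType) (e : rel T) t : odd_Kminor e t -> t <= #|T|.
Proof.
case=> X [B [dis [conn _]]].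
have ne : forall i, exists x, x \in B i by move=> i; case: (conn i) => /set0Pn.
pose f i := xchoose (ne i).
have fP : forall i, f i \in B i := fun i => xchooseP (ne i).
have : injective f.
  move=> i j eij; apply/eqP; apply/negPn/negP => nij.
  have := dis i j nij; rewrite -setI_eq0 => /eqP/setP/(_ (f i)); rewrite !inE fP /= eij fP //.
by move=> fi; have := leq_card f fi; rewrite card_ord.
Qed.

Theorem lemma2p2 (s k : nat) : 2 <= s -> 2 <= k ->
  (exists h, is_odd_hadwiger (Kbar (s * k) k) h /\ chi (Kbar (s * k) k) <= h) /\
  strongly_1shallow_Kminor (Kbar (s * k) k) (chi (Kbar (s * k) k)).
Proof.
move=> s2 k2.
pose M := 'C((s * k).-1, k.-1).
have Ms : M * s = 'C(s * k, k).
  have := mul_bin_diag (s * k) k.-1; rewrite prednK; last by lia.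
  move=> h; apply/eqP; rewrite -(eqn_pmul2l (_ : 0 < k)); last by lia.
  by rewrite -h /M; apply/eqP; lia.
have [P IP] := @reach (s * k) k M s erefl Ms (s * k) (leqnn _).
case: (IP) => Hd _ _.
have exA : forall A : kset (s * k) k, exists p : 'I_M * 'I_s, P p.1 p.2 == val A.
  move=> A; have := @final_cnt _ _ _ _ P IP (val A) (eqP (valP A)); rewrite /cnt => h.
  have : 0 < #|[set p : 'I_M * 'I_s | P p.1 p.2 == val A]| by rewrite h.
  by case/card_gt0P => p; rewrite inE => hp; exists p.
have colM : colorable (Kbar (s * k) k) M.
  apply/existsP; exists [ffun A => (xchoose (exA A)).1].
  apply/forallP => x; apply/forallP => y; apply/implyP => /andP[nxy /andP[_ ne0]]; rewrite !ffunE.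
  have hx := xchooseP (exA x); have hy := xchooseP (exA y).
  move: hx hy; case: (xchoose (exA x)) => jx ix; case: (xchoose (exA y)) => jy iy /= /eqP hx /eqP hy.
  apply/eqP => ej; subst jy.
  case: (eqVneq ix iy) => [ei|ne].
    subst iy; have exy : x = y by apply: val_inj => /=; rewrite -hx -hy.
    by rewrite exy eqxx in nxy.
  by have := Hd jx ix iy ne; rewrite hx hy -setI_eq0 (negbTE ne0).
have chiM : chi (Kbar (s * k) k) <= M.
  by rewrite /chi; case: ex_minnP => c _ min; exact: min _ colM.
have n0 : 0 < s * k by rewrite muln_gt0; lia.
pose o0 : 'I_(s * k) := Ordinal n0.
have ex0 : forall j : 'I_M, exists A : kset (s * k) k,
    (o0 \in val A) && [exists i, P j i == val A].
  move=> j; have [i xi] := cover IP j o0.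
  exists (exist (fun A : {set 'I_(s * k)} => #|A| == k) (P j i) (introT eqP (final_size IP j i))).
  by rewrite /= xi; apply/existsP; exists i.
pose c j := xchoose (ex0 j).
have cP : forall j, (o0 \in val (c j)) && [exists i, P j i == val (c j)] := fun j => xchooseP (ex0 j).
have cinj : injective c.
  move=> j j' e; have := cP j; have := cP j'; rewrite -e => /andP[_ /existsP[i' /eqP h']] /andP[_ /existsP[i /eqP h]].
  have := @final_cnt _ _ _ _ P IP (val (c j)) (eqP (valP (c j))); rewrite /cnt => /eqP /cards1P [q hq].
  have : (j, i) \in [set q] by rewrite -hq inE /= h.
  have : (j', i') \in [set q] by rewrite -hq inE /= h'.
  move=> /set1P e1 /set1P e2; rewrite -e1 in e2; by case: e2.
have cadj : forall j j', j != j' -> Kbar (s * k) k (c j) (c j').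
  move=> j j' ne; rewrite /Kbar; apply/andP; split.
    by apply: contra ne => /eqP e; apply/eqP; apply: cinj; apply: val_inj.
  apply/set0Pn; exists o0; rewrite inE; by case/andP: (cP j) => ->; case/andP: (cP j') => ->.
pose r (i : 'I_(chi (Kbar (s * k) k))) := c (widen_ord chiM i).
have rinj : injective r.
  by move=> i j /cinj e; apply: val_inj; move/(congr1 val): e.
have radj : forall i j, i != j -> Kbar (s * k) k (r i) (r j).
  move=> i j ne; apply: cadj; apply: contra ne => /eqP e; apply/eqP; apply: val_inj.
  by move/(congr1 val): e.
have disj1 : forall i j, i != j -> [disjoint [set r i] & [set r j]].
  move=> i j ne; rewrite -setI_eq0; apply/eqP/setP => x; rewrite !inE.
  apply/negbTE/andP => -[/eqP -> /eqP e]; by move/rinj: e => e; rewrite e eqxx in ne.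
split.
- have bnd := @odd_bound _ (Kbar (s * k) k).
  have oddchi : odd_Kminor (Kbar (s * k) k) (chi (Kbar (s * k) k)).
    exists set0, (fun i => [set r i]); split; [|split].
    + exact: disj1.
    + move=> i; split; first by apply/set0Pn; exists (r i); rewrite inE.
      by move=> u v /set1P -> /set1P ->; apply: connect0.
    + by move=> i j ne; exists (r i), (r j); split; rewrite ?inE ?eqxx //; apply: radj.
  have [h [oh hmax]] := exists_max oddchi bnd.
  by exists h; split; [split|apply: hmax].
- exists r, (fun _ => set0); split; [|split].
  + by move=> i; split; [rewrite inE | move=> l; rewrite inE].
  + by move=> i j ne; rewrite /bag_vertices !setU0; apply: disj1.
  + by move=> i j ne; exists (r i), (r j); rewrite /bag_attach eqxx !inE !eqxx; split => //; apply: radj.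
Qed.
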